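(* For fixed $x,y\ge 1$, let $a_{x,y,n}$ denote the probability that the $(x,y)$ edge-addition process on $n$ vertices generates an $(x,y)$ task-dependency graph. Then $\lim_{n\to\infty}a_{x,y,n}=1$.
   Context: A task-dependency graph is a finite directed acyclic graph (no loops, no multiple edges). A vertex is initial if it has in-degree $0$ and terminal if it has out-degree $0$ (an isolated vertex is both). An $(x,y)$ task-dependency graph has exactly $x$ initial and exactly $y$ terminal vertices. The $(x,y)$ edge-addition process on $n$ vertices: start with the empty graph on $\{1,\dots,n\}$ and repeatedly add, uniformly at random, an edge $(a,b)$ with $a<b$ not yet present; if an addition would cause fewer than $x$ initial vertices or fewer than $y$ terminal vertices, it is cancelled. The process halts if the graph after some edge addition is an $(x,y)$ task-dependency graph, or if no more edges can be added; the result is the final graph. *)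

(* Defs.v *)
From mathcomp Require Import all_boot all_order all_algebra.
Set Implicit Arguments. Unset Strict Implicit. Unset Printing Implicit Defensive.
Import Order.TTheory GRing.Theory Num.Theory.

(* The edge-addition process only ever adds edges (a,b) with a < b, so every
   graph it produces is a DAG without loops/multiple edges. *)
Definition graph n := {set 'I_n * 'I_n}.

Definition candidate_edge n (e : 'I_n * 'I_n) : bool := (e.1 < e.2)%N.

Definition is_initial n (G : graph n) (v : 'I_n) : bool :=
  [forall e in G, e.2 != v].
Definition is_terminal n (G : graph n) (v : 'I_n) : bool :=
  [forall e in G, e.1 != v].

Definition num_initial n (G : graph n) : nat := #|[set v | is_initial G v]|.
Definition num_terminal n (G : graph n) : nat := #|[set v | is_terminal G v]|.

Definition is_TDG (x y : nat) n (G : graph n) : bool :=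
  (num_initial G == x) && (num_terminal G == y).

(* An edge can be added (i.e. is not present and its addition is not cancelled). *)
Definition addable (x y : nat) n (G : graph n) (e : 'I_n * 'I_n) : bool :=
  [&& candidate_edge e, e \notin G,
      (x <= num_initial (e |: G))%N & (y <= num_terminal (e |: G))%N].

Local Open Scope ring_scope.

(* Conditioned on the graph actually
   changing, the next added edge is uniform among the addable edges (cancelled
   draws leave the state unchanged), so we follow this jump chain.
   fuel bounds the number of remaining additions. *)
Fixpoint success_prob (x y : nat) n (fuel : nat) (G : graph n) : rat :=
  match fuel with
  | 0%N => 0
  | k.+1 =>
    let A := [set e | addable x y G e] in
    if A == set0 then (is_TDG x y G)%:R
    else (#|A|%:R)^-1 *
         \sum_(e in A) (if is_TDG x y (e |: G) then 1 else success_prob x y k (e |: G))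
  end.

(* a_{x,y,n}: start from the empty graph; at most n(n-1)/2 < n*n+1 additions. *)
Definition a_xyn (x y n : nat) : rat :=
  success_prob x y (n * n).+1 (set0 : graph n).

(* Main.v *)
Require Import Defs.
From mathcomp Require Import all_boot all_order all_algebra.
From mathcomp Require Import zify ring lra.
Import Order.TTheory GRing.Theory Num.Theory.
Set Implicit Arguments. Unset Strict Implicit. Unset Printing Implicit Defensive.
Local Open Scope ring_scope.
Section Gen.
Variables (x y n : nat).

Lemma is_initialU e (G : graph n) v :
  is_initial (e |: G) v = is_initial G v && (e.2 != v).
Proof.
apply/forallP/andP => [H|[/forallP H1 H2] f]; last first.
  by apply/implyP; rewrite in_setU1 => /orP[/eqP->//|]; exact: (implyP (H1 f)).
split; last by have := implyP (H e); rewrite setU11 => /(_ isT).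
apply/forallP => f; apply/implyP => fG.
by have := implyP (H f); rewrite in_setU1 fG orbT => /(_ isT).
Qed.

Lemma is_terminalU e (G : graph n) v :
  is_terminal (e |: G) v = is_terminal G v && (e.1 != v).
Proof.
apply/forallP/andP => [H|[/forallP H1 H2] f]; last first.
  by apply/implyP; rewrite in_setU1 => /orP[/eqP->//|]; exact: (implyP (H1 f)).
split; last by have := implyP (H e); rewrite setU11 => /(_ isT).
apply/forallP => f; apply/implyP => fG.
by have := implyP (H f); rewrite in_setU1 fG orbT => /(_ isT).
Qed.

Lemma num_initialU e (G : graph n) :
  num_initial G = ((is_initial G e.2 : nat) + num_initial (e |: G))%N.
Proof.
rewrite /num_initial (cardsD1 e.2) inE; congr (_ + _)%N.
by apply: eq_card => v; rewrite !inE is_initialU andbC eq_sym.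
Qed.

Lemma num_terminalU e (G : graph n) :
  num_terminal G = ((is_terminal G e.1 : nat) + num_terminal (e |: G))%N.
Proof.
rewrite /num_terminal (cardsD1 e.1) inE; congr (_ + _)%N.
by apply: eq_card => v; rewrite !inE is_terminalU andbC eq_sym.
Qed.

Lemma sp_bounds k (G : graph n) :
  0 <= success_prob x y k G <= 1.
Proof.
elim: k G => [|k IH] G /=.
  exact: ler01.
case: ifP => [_|/negbT An0]; first by case: (is_TDG x y G); rewrite /= ?ler01 ?lexx.
set A := [set e | addable x y G e].
have cpos : 0 < (#|A|%:R : rat).
  by rewrite ltr0n; case/set0Pn: An0 => e eA; rewrite (cardD1 e) eA.
apply/andP; split.
  apply: mulr_ge0; first by rewrite invr_ge0 ltW.
  apply: sumr_ge0 => e _; case: ifP => _ //; by case/andP: (IH (e |: G)).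
rewrite ler_pdivrMl // mulr1.
have -> : (#|A|%:R : rat) = \sum_(e in A) 1 by rewrite sumr_const.
apply: ler_sum => e _; case: ifP => _ //; by case/andP: (IH (e |: G)).
Qed.

Definition candS : {set 'I_n * 'I_n} := [set e | candidate_edge e].
Definition invG (G : graph n) :=
  [&& G \subset candS, (x <= num_initial G)%N & (y <= num_terminal G)%N].

Lemma sp_lower (f : graph n -> rat) :
  (forall G, 0 <= f G) ->
  (forall G, invG G -> [set e | addable x y G e] = set0 -> ~~ is_TDG x y G -> 1 <= f G) ->
  (forall G, invG G -> [set e | addable x y G e] != set0 ->
     \sum_(e in [set e | addable x y G e]) f (e |: G)
       <= #|[set e | addable x y G e]|%:R * f G) ->
  forall k G, invG G -> (#|candS| < k + #|G|)%N -> 1 - f G <= success_prob x y k G.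
Proof.
move=> f0 fst fsup; elim=> [|k IH] G iG hk /=.
  by exfalso; case/and3P: iG => sG _ _; have := subset_leq_card sG; lia.
case: ifP => [/eqP A0 | /negbT An0].
  case: (boolP (is_TDG x y G)) => T /=.
    by rewrite lerBlDr lerDl.
  by rewrite subr_le0; exact: fst.
set A := [set e | addable x y G e].
have cpos : 0 < (#|A|%:R : rat).
  by rewrite ltr0n; case/set0Pn: An0 => e eA; rewrite (cardD1 e) eA.
rewrite ler_pdivlMl //.
apply: le_trans (_ : \sum_(e in A) (1 - f (e |: G)) <= _).
  rewrite sumrB sumr_const mulrBr mulr1 lerB //.
  exact: fsup.
apply: ler_sum => e; rewrite inE => eA.
case: ifP => _; first by rewrite lerBlDr lerDl.
have eG : e \notin G by case/and4P: eA.
apply: IH; last by rewrite cardsU1 eG; lia.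
case/and4P: eA => ce _ hI hT; rewrite /invG hI hT andbT.
case/and3P: iG => sG _ _; by rewrite subUset sG andbT sub1set inE ce.
Qed.

End Gen.
Section Spec.
Variables (x y m : nat) (hx : (1 <= x)%N) (hy : (1 <= y)%N).
Local Notation n := m.+2.

Definition f1 (G : graph n) : rat :=
  if is_terminal G ord0 && (x < num_initial G)%N
  then y%:R / (num_terminal G)%:R else 0.

Lemma nA (G : graph n) e : [set e | addable x y G e] = set0 -> addable x y G e = false.
Proof.
move=> A0; apply/negbTE; have : e \notin (set0 : {set 'I_n * 'I_n}) by rewrite in_set0.
by rewrite -A0 inE. Qed.

Lemma st1 (G : graph n) : invG x y G -> [set e | addable x y G e] = set0 ->
  (x < num_initial G)%N -> is_terminal G ord0 && (num_terminal G == y).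
Proof.
move=> iG A0 xI; have nA' e := @nA G e A0.
case/and3P: iG => _ _ hT.
have t0 : is_terminal G ord0.
  apply/negP => /negP nt.
  have allin : forall b : 'I_n, (0 < b)%N -> (ord0, b) \in G.
    move=> b b0; apply/negPn/negP => nin.
    have := nA' (ord0, b); rewrite /addable /candidate_edge /= b0 nin /=.
    have := num_initialU (ord0,b) G; have := num_terminalU (ord0,b) G.
    rewrite /= (negbTE nt) add0n => <- hi; rewrite hT andbT.
    move/negbT; rewrite -ltnNge; case: (is_initial G b) hi => /=; lia.
  have : (num_initial G <= 1)%N.
    rewrite /num_initial -(cards1 (ord0 : 'I_n)); apply: subset_leq_card.
    apply/subsetP => v; rewrite !inE => iv; apply/negPn/negP => v0.
    have : (0 < v)%N.
      by rewrite lt0n; apply: contra v0 => /eqP h; apply/eqP; apply: val_inj.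
    move/allin => vG; move/forallP: iv => /(_ (ord0,v)); rewrite vG /=.
    by move/negP; apply.
  lia.
rewrite t0 /=; apply/eqP.
pose e := (ord0 : 'I_n, @Ordinal n 1 isT).
have eG : e \notin G.
  by apply/negP => eG; move/forallP: t0 => /(_ e); rewrite eG /=; move/negP; apply.
have := nA' e; rewrite /addable /candidate_edge /= eG /=.
have := num_initialU e G; have := num_terminalU e G.
rewrite /= t0 => h1 h2 h3.
have : ~~ ((x <= num_initial (e |: G))%N && (y <= num_terminal (e |: G))%N) by rewrite h3.
rewrite negb_and -!ltnNge => /orP[]; case: (is_initial G _) h2 => /=; lia.
Qed.


Lemma st2 (G : graph n) : invG x y G -> [set e | addable x y G e] = set0 ->
  (y < num_terminal G)%N -> is_initial G ord_max && (num_initial G == x).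
Proof.
move=> iG A0 yT; have nA' e := @nA G e A0.
case/and3P: iG => _ hI _.
have tm : is_initial G ord_max.
  apply/negP => /negP nt.
  have allin : forall b : 'I_n, (b < m.+1)%N -> (b, ord_max) \in G.
    move=> b b0; apply/negPn/negP => nin.
    have := nA' (b, ord_max); rewrite /addable /candidate_edge /= b0 nin /=.
    have := num_terminalU (b,ord_max) G; have := num_initialU (b,ord_max) G.
    rewrite /= (negbTE nt) add0n => <- hi; rewrite hI /=.
    move/negbT; rewrite -ltnNge; case: (is_terminal G b) hi => /=; lia.
  have : (num_terminal G <= 1)%N.
    rewrite /num_terminal -(cards1 (ord_max : 'I_n)); apply: subset_leq_card.
    apply/subsetP => v; rewrite !inE => iv; apply/negPn/negP => v0.
    have : (v < m.+1)%N.
      rewrite ltn_neqAle -ltnS ltn_ord andbT.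
      by apply: contra v0 => /eqP h; apply/eqP; apply: val_inj.
    move/allin => vG; move/forallP: iv => /(_ (v,ord_max)); rewrite vG /=.
    by move/negP; apply.
  lia.
rewrite tm /=; apply/eqP.
pose e := (ord0 : 'I_n, ord_max : 'I_n).
have eG : e \notin G.
  by apply/negP => eG; move/forallP: tm => /(_ e); rewrite eG /=; move/negP; apply.
have := nA' e; rewrite /addable /candidate_edge /= eG /=.
have := num_initialU e G; have := num_terminalU e G.
rewrite /= tm => h1 h2 h3.
have : ~~ ((x <= num_initial (e |: G))%N && (y <= num_terminal (e |: G))%N) by rewrite h3.
rewrite negb_and -!ltnNge => /orP[]; case: (is_terminal G _) h1 => /=; lia.
Qed.

Definition f2 (G : graph n) : rat :=
  if is_initial G ord_max && (y < num_terminal G)%N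
  then x%:R / (num_initial G)%:R else 0.

Lemma sum_ind (A Q : {set 'I_n * 'I_n}) : Q \subset A ->
  \sum_(e in A) (e \in Q)%:R = (#|Q|%:R : rat).
Proof.
move=> QA; rewrite -natr_sum; congr (_%:R).
rewrite (eq_bigr (fun e => if e \in Q then 1 else 0)%N); last by move=> e _; case: (e \in Q).
rewrite -big_mkcondr sum1_card; apply: eq_card => e; rewrite /= ?inE.
by apply/andP/idP => [[]//|eQ]; split => //; exact: (subsetP QA).
Qed.


Lemma rat_step (q p s yy : nat) : (0 < s)%N -> (q <= s * p)%N ->
  q%:R * (yy%:R / s%:R - yy%:R / s.+1%:R) <= p%:R * (yy%:R / s.+1%:R) :> rat.
Proof.
move=> s0 qp.
have sn0 : (s%:R : rat) != 0 by rewrite pnatr_eq0 -lt0n.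
have sn1 : (s.+1%:R : rat) != 0 by rewrite pnatr_eq0.
have e1 : yy%:R / s%:R - yy%:R / s.+1%:R = yy%:R / (s%:R * s.+1%:R) :> rat.
  rewrite [s.+1%:R]mulrS; field.
  apply/andP; split => //; have := ler0n rat s; lra.
have e2 : (s * p)%:R * (yy%:R / (s%:R * s.+1%:R)) = p%:R * (yy%:R / s.+1%:R) :> rat.
  rewrite [s.+1%:R]mulrS natrM; field.
  apply/andP; split => //; have := ler0n rat s; lra.
rewrite e1 -e2; apply: ler_wpM2r; last by rewrite ler_nat.
by apply: divr_ge0; rewrite ?mulr_ge0 ?ler0n.
Qed.


Lemma sm1 (G : graph n) : invG x y G ->
  \sum_(e in [set e | addable x y G e]) f1 (e |: G)
     <= #|[set e | addable x y G e]|%:R * f1 G.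
Proof.
case/and3P => sG hI hT.
set A := [set e | addable x y G e].
rewrite [f1 G]/f1; case: ifP => [/andP[t0 xI] | c]; last first.
  rewrite mulr0 big1 // => e _; rewrite /f1 ifF //.
  apply: negbTE; apply: contraFN c => /andP[]; rewrite is_terminalU => /andP[-> _] h.
  by have := num_initialU e G; lia.
have t1 : (1 <= num_terminal G)%N by lia.
set P := [set e in A | e.1 == ord0].
set Q := [set e in A | (e.1 != ord0) && is_terminal G e.1].
have a0 : 0 <= y%:R / (num_terminal G)%:R :> rat by apply: divr_ge0; rewrite ler0n.
have b0 : 0 <= y%:R / (num_terminal G).-1%:R :> rat by apply: divr_ge0; rewrite ler0n.
apply: le_trans (_ : \sum_(e in A) (y%:R / (num_terminal G)%:R
    + (e \in Q)%:R * (y%:R / (num_terminal G).-1%:R - y%:R / (num_terminal G)%:R)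
    - (e \in P)%:R * (y%:R / (num_terminal G)%:R)) <= _).
  apply: ler_sum => e eA.
  have eA' : addable x y G e by move: eA; rewrite inE.
  have hTe := num_terminalU e G; have hIe := num_initialU e G.
  rewrite /f1 is_terminalU t0 /=.
  have -> : (e \in P) = (e.1 == ord0) by rewrite inE eA.
  have -> : (e \in Q) = (e.1 != ord0) && is_terminal G e.1 by rewrite inE eA.
  case: (eqVneq e.1 ord0) => [e10|e1n0] /=.
    by rewrite mul0r mul1r addr0 subrr.
  rewrite mul0r subr0.
  case: (boolP (is_terminal G e.1)) => te.
    rewrite te /= in hTe.
    have -> : num_terminal (e |: G) = (num_terminal G).-1 by rewrite hTe add1n.
    rewrite mul1r addrC subrK.
    by case: ifP => _; rewrite ?lexx.
  rewrite (negbTE te) /= in hTe.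
  rewrite mul0r addr0.
  have -> : num_terminal (e |: G) = num_terminal G by rewrite hTe.
  by case: ifP => _; rewrite ?lexx.
have QA : Q \subset A by apply/subsetP => e; rewrite inE => /andP[].
have PA : P \subset A by apply/subsetP => e; rewrite inE => /andP[].
rewrite sumrB big_split /= sumr_const -!mulr_suml !sum_ind //.
rewrite -[_ *+ #|A|]mulr_natl.
rewrite -addrA gerDl subr_le0.
have qP : (#|Q| <= (num_terminal G).-1 * #|P|)%N.
  case: (ltnP y (num_terminal G)) => yt.
    have Pn : (m.+1 <= #|P|)%N.
      have ci : #|[set (ord0 : 'I_n, b) | b in [set~ (ord0 : 'I_n)]]| = m.+1.
        by rewrite card_imset ?cardsC1 ?card_ord // => b1 b2 [].
      apply: (@leq_trans #|[set (ord0 : 'I_n, b) | b in [set~ (ord0 : 'I_n)]]|); first by rewrite ci.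
      apply: subset_leq_card; apply/subsetP => e /imsetP[b]; rewrite in_setC1 => bn0 ->.
      rewrite !inE /= eqxx andbT /addable /candidate_edge /=.
      have bpos : (0 < b)%N.
        by rewrite lt0n; apply: contra bn0 => /eqP h; apply/eqP; apply: val_inj.
      have nin : (ord0, b) \notin G.
        by apply/negP => eG; move/forallP: t0 => /(_ (ord0,b)); rewrite eG /=; move/negP; apply.
      rewrite bpos nin /=.
      have := num_initialU (ord0,b) G; have := num_terminalU (ord0,b) G; rewrite /= t0.
      by case: (is_initial G b) => /=; lia.
    have Qn : (#|Q| <= (num_terminal G).-1 * m.+1)%N.
      have <- : #|setX ([set v | is_terminal G v] :\ ord0) [set~ (ord0 : 'I_n)]|
                 = ((num_terminal G).-1 * m.+1)%N.
        rewrite cardsX cardsC1 card_ord /=; congr (_ * _)%N.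
        have := cardsD1 ord0 [set v | is_terminal G v]; rewrite inE t0 /num_terminal => ->.
        by rewrite add1n.
      apply: subset_leq_card; apply/subsetP => -[e1 e2].
      rewrite in_setX !inE /= => /and3P[eA' e1n te]; rewrite e1n te /=.
      case/and4P: eA' => ce _ _ _.
      by apply: contraTneq ce => ->; rewrite /candidate_edge -leqNgt leq0n.
    by apply: leq_trans Qn _; exact: leq_mul.
  have -> : #|Q| = 0%N.
    apply/eqP; rewrite cards_eq0; apply/eqP/setP => e; rewrite !inE.
    apply/negP => /and3P[eA' e1n te].
    have := num_terminalU e G; rewrite te.
    case/and4P: eA' => _ _ _ hTe'; lia.
  by [].
case: (posnP #|Q|) => [->|q0]; first by rewrite mul0r mulr_ge0 ?ler0n.
have [s ts] : exists s, num_terminal G = s.+1 by exists (num_terminal G).-1; lia.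
rewrite ts /= in qP *; apply: rat_step => //.
by move: qP q0; case: s {ts} => //=; rewrite mul0n; lia.
Qed.


Lemma sm2 (G : graph n) : invG x y G ->
  \sum_(e in [set e | addable x y G e]) f2 (e |: G)
     <= #|[set e | addable x y G e]|%:R * f2 G.
Proof.
case/and3P => sG hI hT.
set A := [set e | addable x y G e].
rewrite [f2 G]/f2; case: ifP => [/andP[t0 xI] | c]; last first.
  rewrite mulr0 big1 // => e _; rewrite /f2 ifF //.
  apply: negbTE; apply: contraFN c => /andP[]; rewrite is_initialU => /andP[-> _] h.
  by have := num_terminalU e G; lia.
have t1 : (1 <= num_initial G)%N by lia.
set P := [set e in A | e.2 == ord_max].
set Q := [set e in A | (e.2 != ord_max) && is_initial G e.2].
have a0 : 0 <= x%:R / (num_initial G)%:R :> rat by apply: divr_ge0; rewrite ler0n.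
have b0 : 0 <= x%:R / (num_initial G).-1%:R :> rat by apply: divr_ge0; rewrite ler0n.
apply: le_trans (_ : \sum_(e in A) (x%:R / (num_initial G)%:R
    + (e \in Q)%:R * (x%:R / (num_initial G).-1%:R - x%:R / (num_initial G)%:R)
    - (e \in P)%:R * (x%:R / (num_initial G)%:R)) <= _).
  apply: ler_sum => e eA.
  have eA' : addable x y G e by move: eA; rewrite inE.
  have hTe := num_initialU e G; have hIe := num_terminalU e G.
  rewrite /f2 is_initialU t0 /=.
  have -> : (e \in P) = (e.2 == ord_max) by rewrite inE eA.
  have -> : (e \in Q) = (e.2 != ord_max) && is_initial G e.2 by rewrite inE eA.
  case: (eqVneq e.2 ord_max) => [e10|e1n0] /=.
    by rewrite mul0r mul1r addr0 subrr.
  rewrite mul0r subr0.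
  case: (boolP (is_initial G e.2)) => te.
    rewrite te /= in hTe.
    have -> : num_initial (e |: G) = (num_initial G).-1 by rewrite hTe add1n.
    rewrite mul1r addrC subrK.
    by case: ifP => _; rewrite ?lexx.
  rewrite (negbTE te) /= in hTe.
  rewrite mul0r addr0.
  have -> : num_initial (e |: G) = num_initial G by rewrite hTe.
  by case: ifP => _; rewrite ?lexx.
have QA : Q \subset A by apply/subsetP => e; rewrite inE => /andP[].
have PA : P \subset A by apply/subsetP => e; rewrite inE => /andP[].
rewrite sumrB big_split /= sumr_const -!mulr_suml !sum_ind //.
rewrite -[_ *+ #|A|]mulr_natl.
rewrite -addrA gerDl subr_le0.
have qP : (#|Q| <= (num_initial G).-1 * #|P|)%N.
  case: (ltnP x (num_initial G)) => yt.
    have Pn : (m.+1 <= #|P|)%N.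
      have ci : #|[set (b, ord_max : 'I_n) | b in [set~ (ord_max : 'I_n)]]| = m.+1.
        by rewrite card_imset ?cardsC1 ?card_ord // => b1 b2 [].
      apply: (@leq_trans #|[set (b, ord_max : 'I_n) | b in [set~ (ord_max : 'I_n)]]|); first by rewrite ci.
      apply: subset_leq_card; apply/subsetP => e /imsetP[b]; rewrite in_setC1 => bn0 ->.
      rewrite !inE /= eqxx andbT /addable /candidate_edge /=.
      have bpos : (b < m.+1)%N.
        rewrite ltn_neqAle -ltnS ltn_ord andbT.
        by apply: contra bn0 => /eqP h; apply/eqP; apply: val_inj.
      have nin : (b, ord_max) \notin G.
        by apply/negP => eG; move/forallP: t0 => /(_ (b,ord_max)); rewrite eG /=; move/negP; apply.
      rewrite bpos nin /=.
      have := num_terminalU (b,ord_max) G; have := num_initialU (b,ord_max) G; rewrite /= t0.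
      by case: (is_terminal G b) => /=; lia.
    have Qn : (#|Q| <= (num_initial G).-1 * m.+1)%N.
      have <- : #|setX [set~ (ord_max : 'I_n)] ([set v | is_initial G v] :\ ord_max)|
                 = ((num_initial G).-1 * m.+1)%N.
        rewrite cardsX cardsC1 card_ord /= mulnC; congr (_ * _)%N.
        have := cardsD1 ord_max [set v | is_initial G v]; rewrite inE t0 /num_initial => ->.
        by rewrite add1n.
      apply: subset_leq_card; apply/subsetP => -[e1 e2].
      rewrite in_setX !inE /= => /and3P[eA' e1n te]; rewrite e1n te /= andbT.
      case/and4P: eA' => ce _ _ _.
      apply: contraTneq ce => ->; rewrite /candidate_edge /= -leqNgt.
      by rewrite -ltnS ltn_ord.
    by apply: leq_trans Qn _; exact: leq_mul.
  have -> : #|Q| = 0%N.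
    apply/eqP; rewrite cards_eq0; apply/eqP/setP => e; rewrite !inE.
    apply/negP => /and3P[eA' e1n te].
    have := num_initialU e G; rewrite te.
    case/and4P: eA' => _ _ hTe' _; lia.
  by [].
case: (posnP #|Q|) => [->|q0]; first by rewrite mul0r mulr_ge0 ?ler0n.
have [s ts] : exists s, num_initial G = s.+1 by exists (num_initial G).-1; lia.
rewrite ts /= in qP *; apply: rat_step => //.
by move: qP q0; case: s {ts} => //=; rewrite mul0n; lia.
Qed.


Lemma f1_ge0 G : 0 <= f1 G.
Proof. by rewrite /f1; case: ifP => _ //; apply: divr_ge0; rewrite ler0n. Qed.
Lemma f2_ge0 G : 0 <= f2 G.
Proof. by rewrite /f2; case: ifP => _ //; apply: divr_ge0; rewrite ler0n. Qed.

Lemma numI0 : num_initial (set0 : graph n) = n.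
Proof.
rewrite /num_initial; have -> : [set v | is_initial (set0 : graph n) v] = setT.
  by apply/setP => v; rewrite !inE; apply/forallP => e; rewrite in_set0.
by rewrite cardsT card_ord.
Qed.
Lemma numT0 : num_terminal (set0 : graph n) = n.
Proof.
rewrite /num_terminal; have -> : [set v | is_terminal (set0 : graph n) v] = setT.
  by apply/setP => v; rewrite !inE; apply/forallP => e; rewrite in_set0.
by rewrite cardsT card_ord.
Qed.

Lemma a_lower : (x <= n)%N -> (y <= n)%N ->
  1 - (x + y)%:R / n%:R <= a_xyn x y n.
Proof.
move=> xn yn.
have := @sp_lower x y n (fun G => f1 G + f2 G) _ _ _ (n * n).+1 set0.
rewrite /a_xyn => H; apply: le_trans (H _ _ _ _ _); first last.
- rewrite cards0 addn0 ltnS; apply: leq_trans (subset_leq_card (subsetT _)) _.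
  by rewrite cardsT card_prod card_ord.
- by rewrite /invG sub0set numI0 numT0 xn yn.
- move=> G iG _; rewrite /= big_split /= mulrDr; apply: lerD; [exact: sm1 | exact: sm2].
- move=> G iG A0 nT; case/and3P: (iG) => _ hI hT.
  case: (ltnP x (num_initial G)) => xI.
    case/andP: (st1 iG A0 xI) => t0 /eqP Ty.
    rewrite /f1 t0 xI Ty /= divff ?pnatr_eq0 -?lt0n // lerDl; exact: f2_ge0.
  have Ix : num_initial G = x by lia.
  have yT : (y < num_terminal G)%N.
    move: nT; rewrite /is_TDG Ix eqxx /=; lia.
  case/andP: (st2 iG A0 yT) => t0 /eqP Ix'.
  rewrite /f2 t0 yT Ix' /= divff ?pnatr_eq0 -?lt0n // lerDr; exact: f1_ge0.
- by move=> G; apply: addr_ge0; [exact: f1_ge0 | exact: f2_ge0].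
rewrite lerB // natrD mulrDl addrC; apply: lerD.
  by rewrite /f2 numI0; case: ifP => _ //; apply: divr_ge0; rewrite ler0n.
by rewrite /f1 numT0; case: ifP => _ //; apply: divr_ge0; rewrite ler0n.
Qed.

End Spec.

Local Open Scope ring_scope.
Theorem mainTheorem18 (x y : nat) (hx : (1 <= x)%N) (hy : (1 <= y)%N) :
  forall eps : rat, 0 < eps ->
  exists N : nat, forall n : nat, (N <= n)%N -> `|1 - a_xyn x y n| < eps.
Proof.
move=> eps e0.
set K := Num.Def.archi_bound ((x + y)%:R / eps).
have hK : (x + y)%:R / eps < K%:R by apply: archi_boundP; apply: divr_ge0; rewrite ?ler0n ?ltW.
exists (K + x + y + 2)%N => n hn.
have [m nm] : exists m, n = m.+2 by exists n.-2; lia.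
subst n.
have hl := @a_lower x y m hx hy ltac:(lia) ltac:(lia).
have hb := @sp_bounds x y m.+2 (m.+2 * m.+2).+1 set0.
case/andP: hb => _ hb1.
rewrite ger0_norm; last by rewrite subr_ge0.
apply: le_lt_trans (_ : (x + y)%:R / m.+2%:R < eps); first by rewrite lerBlDr -lerBlDl.
rewrite ltr_pdivrMr ?ltr0n //.
rewrite ltr_pdivrMr // in hK.
apply: lt_le_trans hK _; rewrite [eps * _]mulrC; apply: ler_wpM2r; [exact: ltW | rewrite ler_nat; lia].
Qed.
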